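(* Let $U\subset\mathbb{R}^n$ be an open set with coordinates $u^{i(\alpha)}$, $\alpha\in\{1,\dots,r\}$, $i\in\{1,\dots,m_\alpha\}$, where $n=m_1+\dots+m_r$, equipped with the commutative associative product $\circ$ with structure constants $c^{i(\alpha)}_{j(\beta)k(\gamma)}=\delta^\alpha_\beta\delta^\alpha_\gamma\delta^i_{j+k-1}$ and unit $e$ with components $e^{i(\alpha)}=\delta^i_1$. Let $X$ be a vector field on $U$ and let $\nabla$ be the torsionless connection on $U$ uniquely determined by the conditions $$\nabla_j e^i=0,\qquad c^i_{js}\nabla_kX^s-c^i_{ks}\nabla_jX^s=0,\qquad i,j,k\in\{1,\dots,n\}.$$ Let $Y$ be a vector field on $U$ satisfying $$(d_\nabla(Y\circ))^i_{jk}:=c^i_{js}\nabla_kY^s-c^i_{ks}\nabla_jY^s=0,\qquad i,j,k\in\{1,\dots,n\}.$$ Let $\mathbf{u}(x,t)=(u^1(x,t),\dots,u^n(x,t))$ be a (differentiable) function with values in $U$ satisfying the algebraic system $$x\,e^{i}+t\,X^{i}(\mathbf{u}(x,t))=Y^{i}(\mathbf{u}(x,t)),\qquad i\in\{1,\dots,n\}.$$ Then $\mathbf{u}(x,t)$ is a solution of the system of hydrodynamic type $$u^i_t=c^i_{jk}X^j(\mathbf{u})\,u^k_x,\qquad i\in\{1,\dots,n\}.$$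
   Context: Double-index notation: the index $i(\alpha)$ denotes the single index $m_1+\dots+m_{\alpha-1}+i$, and summation over repeated indices is understood. The coordinates are canonical (David–Hertling) coordinates of a regular F-manifold with Euler vector field, in which the Euler vector field has components $E^{i(\alpha)}=u^{i(\alpha)}$; in these coordinates the matrix $V^i_k=c^i_{jk}X^j$ is block-diagonal with $r$ blocks, the $\alpha$-th block being the $m_\alpha\times m_\alpha$ lower-triangular Toeplitz matrix with entries $V^{i(\alpha)}_{k(\alpha)}=X^{(i-k+1)(\alpha)}$ for $i\ge k$ and $0$ for $i<k$. The uniqueness of $\nabla$ holds under the standing assumptions that $X^{1(\alpha)}\neq X^{1(\beta)}$ for $\alpha\ne\beta$ and $X^{2(\alpha)}\neq 0$ for each $\alpha$. A vector field $Y$ with $d_\nabla(Y\circ)=0$ defines a symmetry $\mathbf{u}_\tau=Y\circ\mathbf{u}_x$ of the system. *)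

(* Defs.v *)
From HB Require Import structures.
From mathcomp Require Import all_boot all_order all_algebra.
From mathcomp Require Import all_classical all_reals all_analysis.
Set Implicit Arguments. Unset Strict Implicit. Unset Printing Implicit Defensive.
Import Order.TTheory GRing.Theory Num.Theory.
Import numFieldNormedType.Exports.
Local Open Scope ring_scope.

(* The block sizes are given by a sequence ms = [:: m_1; ...; m_r].
   Indices are 0-based: the single index p corresponds to the double index
   i(alpha) with alpha - 1 = blk ms p and i - 1 = pos ms p. *)

Definition bstart (ms : seq nat) (a : nat) : nat := sumn (take a ms).

(* block (0-based) containing the single index p (for p < sumn ms) *)
Definition blk (ms : seq nat) (p : nat) : nat :=
  \sum_(a < size ms) (bstart ms a.+1 <= p)%N.

Definition pos (ms : seq nat) (p : nat) : nat := (p - bstart ms (blk ms p))%N.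

Definition dbl (ms : seq nat) (a i : nat) : nat := (bstart ms a + i)%N.

(* structure constants c^p_{q s} = delta^alpha_beta delta^alpha_gamma
   delta^i_{j+k-1}  (in 0-based positions: i-1 = (j-1)+(k-1)) *)
Definition cst_F (R : ringType) (ms : seq nat) (p q s : nat) : R :=
  if [&& blk ms q == blk ms p, blk ms s == blk ms p &
         pos ms p == (pos ms q + pos ms s)%N] then 1 else 0.

Definition unit_F (R : ringType) (ms : seq nat) (p : nat) : R :=
  if pos ms p == 0%N then 1 else 0.

Section Calc.
Variables (R : realType) (n : nat).

Definition comp (Z : 'rV[R]_n -> 'rV[R]_n) (s : 'I_n) : 'rV[R]_n -> R :=
  fun u => Z u ord0 s.

Definition basis_vec (k : 'I_n) : 'rV[R]_n := delta_mx ord0 k.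

Definition pd (f : 'rV[R]_n -> R) (k : 'I_n) (u : 'rV[R]_n) : R :=
  derive f u (basis_vec k).

Definition cov (Gamma : 'I_n -> 'I_n -> 'I_n -> 'rV[R]_n -> R)
  (Z : 'rV[R]_n -> 'rV[R]_n) (k s : 'I_n) (u : 'rV[R]_n) : R :=
  pd (comp Z s) k u + \sum_(l < n) Gamma s k l u * Z u ord0 l.

Definition dnabla_circ (ms : seq nat)
  (Gamma : 'I_n -> 'I_n -> 'I_n -> 'rV[R]_n -> R)
  (Z : 'rV[R]_n -> 'rV[R]_n) (i j k : 'I_n) (u : 'rV[R]_n) : R :=
  \sum_(s < n) (cst_F R ms i j s * cov Gamma Z k s u
                - cst_F R ms i k s * cov Gamma Z j s u).

End Calc.

(* Main.v *)
Require Import Defs.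
From HB Require Import structures.
From mathcomp Require Import all_boot all_order all_algebra.
From mathcomp Require Import all_classical all_reals all_analysis.
From mathcomp Require Import zify ring.
Import Order.TTheory GRing.Theory Num.Theory.
Import numFieldNormedType.Exports.
Local Open Scope ring_scope.
Set Implicit Arguments. Unset Strict Implicit.



Lemma bstart0 ms : bstart ms 0 = 0%N.
Proof. by case: ms. Qed.

Lemma bstart_cons m ms a : bstart (m :: ms) a.+1 = (m + bstart ms a)%N.
Proof. by []. Qed.

Lemma blk_cons m ms p :
  blk (m :: ms) p = if (p < m)%N then 0%N else (blk ms (p - m)).+1.
Proof.
rewrite /blk big_ord_recl.
have -> : bstart (m :: ms) (@ord0 (size ms)).+1 = m by rewrite bstart_cons bstart0 addn0.
case: ltnP => hp.
  rewrite add0n big1 // => a _.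
  rewrite bstart_cons.
  by have -> : (m + bstart ms (lift ord0 a) <= p)%N = false by lia.
rewrite addnC addn1; congr S; apply: eq_bigr => a _.
by rewrite bstart_cons leq_subRL.
Qed.

Lemma pos_cons m ms p :
  pos (m :: ms) p = if (p < m)%N then p else pos ms (p - m).
Proof.
rewrite /pos blk_cons; case: ifP => h; first by rewrite bstart0 subn0.
by rewrite bstart_cons subnDA.
Qed.

Lemma blk_pos_lt ms p : (p < sumn ms)%N ->
  (blk ms p < size ms)%N /\ (pos ms p < nth 0%N ms (blk ms p))%N.
Proof.
elim: ms p => [|m ms IH] p //=.
rewrite blk_cons pos_cons; case: ifP => h //= hp.
have /IH [h1 h2] : (p - m < sumn ms)%N by lia.
by split.
Qed.

Lemma dbl_spec ms a q : (a < size ms)%N -> (q < nth 0%N ms a)%N ->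
  [/\ (dbl ms a q < sumn ms)%N, blk ms (dbl ms a q) = a & pos ms (dbl ms a q) = q].
Proof.
rewrite /dbl.
elim: ms a => [|m ms IH] [|a] //= ha hq.
  by rewrite bstart0 add0n blk_cons pos_cons hq; split => //; lia.
rewrite bstart_cons.
have [h1 h2 h3] := IH a ha hq.
rewrite blk_cons pos_cons.
have -> : (m + bstart ms a + q < m)%N = false by lia.
have -> : (m + bstart ms a + q - m = bstart ms a + q)%N by lia.
by rewrite h2 h3; split => //; lia.
Qed.

Lemma blk_pos_inj ms p p' : (p < sumn ms)%N -> (p' < sumn ms)%N ->
  blk ms p = blk ms p' -> pos ms p = pos ms p' -> p = p'.
Proof.
elim: ms p p' => [|m ms IH] p p' //=.
rewrite !blk_cons !pos_cons.
case: ifP => h; case: ifP => h' //= hp hp' hb hq.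
have := IH (p - m)%N (p' - m)%N.
have E1 : (p - m < sumn ms)%N by lia.
have E2 : (p' - m < sumn ms)%N by lia.
case: hb => hb' /(_ E1 E2 hb' hq); lia.
Qed.



Lemma if10M (R : ringType) (a b : bool) :
  ((if a then 1 else 0 : R) * (if b then 1 else 0)) = if a && b then 1 else 0.
Proof. by case: a; case: b; rewrite ?mulr1 ?mulr0 ?mul0r. Qed.

Lemma cst_sym (R : ringType) ms p q s : cst_F R ms p q s = cst_F R ms p s q.
Proof. by rewrite /cst_F addnC andbCA. Qed.

Lemma sum_blkpos (R : ringType) ms (F : 'I_(sumn ms) -> R) a q (s0 : 'I_(sumn ms)) :
  blk ms s0 = a -> pos ms s0 = q ->
  \sum_(s < sumn ms) (if (blk ms s == a) && (pos ms s == q) then F s else 0) = F s0.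
Proof.
move=> h1 h2; rewrite (bigD1 s0) //= h1 h2 !eqxx /= big1 ?addr0 // => s hs.
case: ifP => // /andP [/eqP e1 /eqP e2]; case/negP: hs; apply/eqP; apply: val_inj => /=.
by apply: (blk_pos_inj (ltn_ord s) (ltn_ord s0)); rewrite ?e1 ?e2.
Qed.

Lemma cst_unit (R : ringType) ms (i k : 'I_(sumn ms)) :
  \sum_(j < sumn ms) unit_F R ms j * cst_F R ms i j k = (i == k)%:R.
Proof.
rewrite (eq_bigr (fun j : 'I_(sumn ms) => if (blk ms j == blk ms i) && (pos ms j == 0%N)
   then (if (blk ms k == blk ms i) && (pos ms i == pos ms k) then 1 else 0) else 0)); last first.
  move=> j _; rewrite /unit_F /cst_F; case: (pos ms j =P 0%N) => [->|_];
  case: (blk ms j == blk ms i); rewrite /= ?mul0r ?mul1r ?andbF ?add0n //.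
have [hb hp] := blk_pos_lt (ltn_ord i).
have [d1 d2 d3] := dbl_spec hb (leq_ltn_trans (leq0n _) hp).
rewrite (@sum_blkpos _ _ _ _ _ (Ordinal d1)) //.
case: (i =P k) => [->|ne]; first by rewrite !eqxx.
case: ifP => // /andP [/eqP e1 /eqP e2]; case: ne; apply: val_inj.
exact: (blk_pos_inj (ltn_ord i) (ltn_ord k)).
Qed.

Definition Pa (R : ringType) ms (j k l i : nat) : R :=
  if [&& blk ms j == blk ms i, blk ms k == blk ms i, blk ms l == blk ms i &
      pos ms i == (pos ms j + pos ms k + pos ms l)%N] then 1 else 0.

Lemma assocL (R : ringType) ms (i j k l : 'I_(sumn ms)) :
  \sum_(s < sumn ms) cst_F R ms i j s * cst_F R ms s k l = Pa R ms j k l i.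
Proof.
rewrite (eq_bigr (fun s : 'I_(sumn ms) => if (blk ms s == blk ms i) &&
   (pos ms s == pos ms k + pos ms l)%N then Pa R ms j k l i else 0)); last first.
  move=> s _; rewrite /cst_F /Pa if10M.
  case E1: (blk ms s == blk ms i); rewrite /= ?andbF //.
  case E2: (pos ms s == (pos ms k + pos ms l)%N); rewrite /= ?andbF //.
  move/eqP: E1 => ->; move/eqP: E2 => ->.
  rewrite addnA andbT.
  by case: (blk ms j == blk ms i); case: (blk ms k == blk ms i);
     case: (blk ms l == blk ms i); case: (pos ms i == _).
rewrite /Pa; case: ifP => HP; last by rewrite big1 // => s _; case: ifP.
case/and4P: HP => _ _ _ /eqP Hp.
have [hb hp] := blk_pos_lt (ltn_ord i).
have hq : (pos ms k + pos ms l < nth 0%N ms (blk ms i))%N by lia.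
have [d1 d2 d3] := dbl_spec hb hq.
by rewrite (@sum_blkpos _ _ _ _ _ (Ordinal d1)).
Qed.

Lemma cst_assoc (R : ringType) ms (i j k l : 'I_(sumn ms)) :
  \sum_(s < sumn ms) cst_F R ms i j s * cst_F R ms s k l =
  \sum_(s < sumn ms) cst_F R ms i s l * cst_F R ms s j k.
Proof.
rewrite assocL (eq_bigr (fun s : 'I_(sumn ms) => cst_F R ms i l s * cst_F R ms s j k));
  last by move=> s _; rewrite cst_sym.
rewrite assocL /Pa; congr (if _ then _ else _).
rewrite (addnC _ (pos ms l)) addnA.
by case: (blk ms j == blk ms i); case: (blk ms k == blk ms i);
   case: (blk ms l == blk ms i).
Qed.



Definition mulF (R : comRingType) ms (a b : 'I_(sumn ms) -> R) (i : 'I_(sumn ms)) : R :=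
  \sum_(j < sumn ms) \sum_(k < sumn ms) cst_F R ms i j k * a j * b k.

Lemma eq_mulF (R : comRingType) ms (a a' b b' : 'I_(sumn ms) -> R) i :
  a =1 a' -> b =1 b' -> mulF a b i = mulF a' b' i.
Proof.
move=> ha hb; apply: eq_bigr => j _; apply: eq_bigr => k _; by rewrite ha hb.
Qed.

Lemma mulFC (R : comRingType) ms (a b : 'I_(sumn ms) -> R) i :
  mulF a b i = mulF b a i.
Proof.
rewrite /mulF exchange_big; apply: eq_bigr => k _; apply: eq_bigr => j _.
by rewrite cst_sym mulrAC.
Qed.

Lemma mulF1 (R : comRingType) ms (b : 'I_(sumn ms) -> R) i :
  mulF (fun j => unit_F R ms j) b i = b i.
Proof.
rewrite /mulF exchange_big.
rewrite (eq_bigr (fun k : 'I_(sumn ms) => (\sum_(j < sumn ms) unit_F R ms j * cst_F R ms i j k) * b k));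
  last by move=> k _; rewrite mulr_suml; apply: eq_bigr => j _; rewrite (mulrC (cst_F _ _ _ _ _)).
rewrite (bigD1 i) //= cst_unit eqxx mul1r big1 ?addr0 // => k hk.
by rewrite cst_unit eq_sym (negbTE hk) mul0r.
Qed.

Lemma sum3_rot (R : nmodType) n (F : 'I_n -> 'I_n -> 'I_n -> R) :
  \sum_(a < n) \sum_(b < n) \sum_(c < n) F a b c =
  \sum_(b < n) \sum_(c < n) \sum_(a < n) F a b c.
Proof.
rewrite exchange_big; apply: eq_bigr => b _; exact: exchange_big.
Qed.

Lemma mulFA (R : comRingType) ms (a b c : 'I_(sumn ms) -> R) i :
  mulF (fun p => mulF a b p) c i = mulF a (fun p => mulF b c p) i.
Proof.
pose n := sumn ms.
transitivity (\sum_(j < n) \sum_(k < n) \sum_(l < n)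
  (\sum_(s < n) cst_F R ms i s l * cst_F R ms s j k) * (a j * b k * c l)).
  rewrite /mulF.
  transitivity (\sum_(s < n) \sum_(l < n) \sum_(j < n) \sum_(k < n)
      cst_F R ms i s l * cst_F R ms s j k * (a j * b k * c l)).
    apply: eq_bigr => s _; apply: eq_bigr => l _.
    rewrite mulr_sumr mulr_suml; apply: eq_bigr => j _.
    rewrite mulr_sumr mulr_suml; apply: eq_bigr => k _.
    ring.
  rewrite sum3_rot.
  transitivity (\sum_(l < n) \sum_(j < n) \sum_(k < n) \sum_(s < n)
      cst_F R ms i s l * cst_F R ms s j k * (a j * b k * c l)).
    apply: eq_bigr => l _; apply: eq_bigr => j _; exact: exchange_big.
  rewrite sum3_rot; apply: eq_bigr => j _; apply: eq_bigr => k _; apply: eq_bigr => l _.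
  by rewrite mulr_suml.
symmetry.
transitivity (\sum_(j < n) \sum_(k < n) \sum_(l < n)
  (\sum_(s < n) cst_F R ms i j s * cst_F R ms s k l) * (a j * b k * c l)).
  rewrite /mulF; apply: eq_bigr => j _.
  transitivity (\sum_(s < n) \sum_(k < n) \sum_(l < n)
      cst_F R ms i j s * cst_F R ms s k l * (a j * b k * c l)).
    apply: eq_bigr => s _.
    rewrite mulr_sumr; apply: eq_bigr => k _.
    rewrite mulr_sumr; apply: eq_bigr => l _.
    ring.
  rewrite sum3_rot; apply: eq_bigr => k _; apply: eq_bigr => l _.
  by rewrite mulr_suml.
apply: eq_bigr => j _; apply: eq_bigr => k _; apply: eq_bigr => l _.
by rewrite cst_assoc.
Qed.



Lemma pd_eq (R : realType) n (Z : 'rV[R]_n -> 'rV[R]_n) v i k :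
  differentiable Z v -> pd (Defs.comp Z i) k v = ('d Z v (basis_vec R k)) ord0 i.
Proof.
move=> dZ; rewrite /pd /Defs.comp.
have := derive_mx (diff_derivable (v:=basis_vec R k) dZ).
move/(congr1 (fun M : 'rV[R]_n => M ord0 i)); rewrite mxE => <-.
by rewrite deriveE.
Qed.

Lemma comp_derivable (R : realType) n (Z : 'rV[R]_n -> 'rV[R]_n) (g : R -> 'rV[R]_n) x0 i :
  derivable g x0 1 -> differentiable Z (g x0) ->
  derivable (fun y => Z (g y) ord0 i) x0 1.
Proof.
move=> /derivable1_diffP dg dZ.
apply: diff_derivable.
have dZg : differentiable (Z \o g) x0 := differentiable_comp dg dZ.
exact: (differentiable_comp dZg (differentiable_coord _ ord0 i)).
Qed.

Lemma chain (R : realType) n (Z : 'rV[R]_n -> 'rV[R]_n) (g : R -> 'rV[R]_n) x0 i :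
  derivable g x0 1 -> differentiable Z (g x0) ->
  derive (fun y => Z (g y) ord0 i) x0 1 =
  \sum_(k < n) derive g x0 1 ord0 k * pd (Defs.comp Z i) k (g x0).
Proof.
move=> dg1 dZ.
have dg : differentiable g x0 by apply/derivable1_diffP.
have dZg : differentiable (Z \o g) x0 := differentiable_comp dg dZ.
have -> : derive (fun y => Z (g y) ord0 i) x0 1 = derive (Z \o g) x0 1 ord0 i.
  by rewrite derive_mx ?mxE //; exact: diff_derivable.
rewrite deriveE // diff_comp // /=.
have -> : 'd g x0 1 = 'D_1 g x0 by rewrite deriveE.
set u := 'D_1 g x0.
rewrite {1}(row_sum_delta u) linear_sum summxE; apply: eq_bigr => k _.
by rewrite linearZ mxE pd_eq.
Qed.



Lemma near_x (R : realType) (D : set (R * R)) x t :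
  open D -> D (x, t) -> \forall y \near x, D (y, t).
Proof.
move=> oD Dxt.
have : nbhs (x, t) D by apply: open_nbhs_nbhs; split.
case=> -[A B] /= [nA nB] sub.
apply: filterS nA => y Ay; apply: sub; split => //=; exact: nbhs_singleton nB.
Qed.

Lemma near_t (R : realType) (D : set (R * R)) x t :
  open D -> D (x, t) -> \forall s \near t, D (x, s).
Proof.
move=> oD Dxt.
have : nbhs (x, t) D by apply: open_nbhs_nbhs; split.
case=> -[A B] /= [nA nB] sub.
apply: filterS nB => s Bs; apply: sub; split => //=; exact: nbhs_singleton nA.
Qed.

Lemma deriv_x (R : realType) (f : R -> R) (c t x : R) : derivable f x 1 ->
  derive (fun y : R => y * c + t * f y) x 1 = c + t * derive f x 1.
Proof.
move=> df.
have i1 := @derivable_id _ _ x 1.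
have c1 := derivable_cst c x 1.
have c2 := derivable_cst t x 1.
have d1 : derivable (fun y : R => y * c) x 1.
  have h := derivableM (f := id) (g := cst c) i1 c1; exact: h.
have d2 : derivable (fun y : R => t * f y) x 1.
  have h := derivableM (f := cst t) (g := f) c2 df; exact: h.
rewrite (deriveD (f := fun y : R => y * c) (g := fun y : R => t * f y)) //.
have e1 := deriveM (f := id) (g := cst c) i1 c1.
have e2 := deriveM (f := cst t) (g := f) c2 df.
rewrite [X in X + _]e1 [X in _ + X]e2.
rewrite !derive_cst derive_id /=.
by rewrite /GRing.scale /= !mulr0 add0r addr0 mulr1.
Qed.

Lemma deriv_t (R : realType) (f : R -> R) (c t x : R) : derivable f t 1 ->
  derive (fun s : R => x * c + s * f s) t 1 = f t + t * derive f t 1.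
Proof.
move=> df.
have i1 := @derivable_id _ _ t 1.
have c1 := derivable_cst (x * c) t 1.
have d2 : derivable (fun s : R => s * f s) t 1.
  have h := derivableM (f := id) (g := f) i1 df; exact: h.
rewrite (deriveD (f := cst (x * c)) (g := fun s : R => s * f s)) //.
have e2 := deriveM (f := id) (g := f) i1 df.
rewrite [X in _ + X]e2.
rewrite !derive_cst derive_id /=.
by rewrite /GRing.scale /= add0r mulr1 addrC.
Qed.



Lemma covW (R : comRingType) ms (cv : 'I_(sumn ms) -> 'I_(sumn ms) -> R) :
  (forall i j k : 'I_(sumn ms), \sum_(s < sumn ms) (cst_F R ms i j s * cv k s - cst_F R ms i k s * cv j s) = 0) ->
  forall k i : 'I_(sumn ms), cv k i = \sum_(s < sumn ms) cst_F R ms i k s *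
                         (\sum_(j < sumn ms) unit_F R ms j * cv j s).
Proof.
move=> H k i.
transitivity (\sum_(s < sumn ms) (\sum_(j < sumn ms) unit_F R ms j * cst_F R ms i j s) * cv k s).
  rewrite (bigD1 i) //= cst_unit eqxx mul1r big1 ?addr0 // => s hs.
  by rewrite cst_unit eq_sym (negbTE hs) mul0r.
transitivity (\sum_(j < sumn ms) unit_F R ms j * \sum_(s < sumn ms) cst_F R ms i j s * cv k s).
  under eq_bigr => s _ do rewrite mulr_suml.
  rewrite exchange_big; apply: eq_bigr => j _; rewrite mulr_sumr.
  by apply: eq_bigr => s _; rewrite mulrA.
transitivity (\sum_(j < sumn ms) unit_F R ms j * \sum_(s < sumn ms) cst_F R ms i k s * cv j s).
  apply: eq_bigr => j _; congr (_ * _); apply/eqP; rewrite -subr_eq0 -sumrB; apply/eqP.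
  exact: H.
under eq_bigr => j _ do rewrite mulr_sumr.
rewrite exchange_big; apply: eq_bigr => s _; rewrite mulr_sumr.
by apply: eq_bigr => j _; ring.
Qed.

Lemma sumM_mulF (R : comRingType) ms (W u : 'I_(sumn ms) -> R) (i : 'I_(sumn ms)) :
  \sum_(k < sumn ms) (\sum_(s < sumn ms) cst_F R ms i k s * W s) * u k = mulF W u i.
Proof.
rewrite /mulF exchange_big; apply: eq_bigr => k _; rewrite mulr_suml.
by apply: eq_bigr => s _; rewrite cst_sym.
Qed.

Unset Implicit Arguments. Set Strict Implicit.

Theorem theorem2p1 (R : realType) (ms : seq nat)
  (U : set 'rV[R]_(sumn ms))
  (X Y : 'rV[R]_(sumn ms) -> 'rV[R]_(sumn ms))
  (Gamma : 'I_(sumn ms) -> 'I_(sumn ms) -> 'I_(sumn ms) ->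
           'rV[R]_(sumn ms) -> R)
  (D : set (R * R)) (uu : R -> R -> 'rV[R]_(sumn ms)) :
  (* block structure: r blocks of sizes m_alpha >= 1 *)
  all (fun m => 0 < m)%N ms ->
  open U ->
  (* X and Y are (differentiable) vector fields on U *)
  (forall u, U u -> differentiable X u) ->
  (forall u, U u -> differentiable Y u) ->
  (* standing assumptions ensuring uniqueness of nabla:
     X^{1(alpha)} <> X^{1(beta)} for alpha <> beta, X^{2(alpha)} <> 0 *)
  (forall u, U u -> forall a b : 'I_(size ms), a != b ->
     forall (pa : (dbl ms a 0 < sumn ms)%N) (pb : (dbl ms b 0 < sumn ms)%N),
     X u ord0 (Ordinal pa) != X u ord0 (Ordinal pb)) ->
  (forall u, U u -> forall a : 'I_(size ms),
     forall (pa : (1 < nth 0%N ms a)%N) (p2 : (dbl ms a 1 < sumn ms)%N),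
     X u ord0 (Ordinal p2) != 0) ->
  (* nabla is torsionless *)
  (forall i j k u, U u -> Gamma i j k u = Gamma i k j u) ->
  (* nabla_j e^i = 0 (e is constant, so this is Gamma^i_{jl} e^l = 0) *)
  (forall i j u, U u ->
     \sum_(l < sumn ms) Gamma i j l u * unit_F R ms l = 0) ->
  (* d_nabla (X o) = 0 *)
  (forall i j k u, U u -> dnabla_circ ms Gamma X i j k u = 0) ->
  (* d_nabla (Y o) = 0 *)
  (forall i j k u, U u -> dnabla_circ ms Gamma Y i j k u = 0) ->
  (* u(x,t) : a differentiable function on an open domain D, valued in U,
     solving x e + t X(u) = Y(u) *)
  open D ->
  (forall x t, D (x, t) -> U (uu x t)) ->
  (forall x t, D (x, t) -> derivable (fun y => uu y t) x 1) ->
  (forall x t, D (x, t) -> derivable (fun s => uu x s) t 1) ->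
  (forall x t, D (x, t) -> forall i : 'I_(sumn ms),
     x * unit_F R ms i + t * X (uu x t) ord0 i = Y (uu x t) ord0 i) ->
  (* conclusion: u_t^i = c^i_{jk} X^j(u) u_x^k *)
  forall x t, D (x, t) -> forall i : 'I_(sumn ms),
    derive (fun s => uu x s) t 1 ord0 i =
    \sum_(j < sumn ms) \sum_(k < sumn ms)
      cst_F R ms i j k * X (uu x t) ord0 j *
      derive (fun y => uu y t) x 1 ord0 k.
Proof.
move=> _ _ dX dY _ _ _ Ge HX HY oD DU dgx dht Hsol x t Dxt i.
have Uv : U (uu x t) := DU _ _ Dxt.
have dXv := dX _ Uv; have dYv := dY _ Uv.
have gx := dgx _ _ Dxt; have ht := dht _ _ Dxt.
have Ex : forall i0 : 'I_(sumn ms),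
  \sum_(k < sumn ms) 'D_1 (fun y => uu y t) x ord0 k * pd (Defs.comp Y i0) k (uu x t) =
  unit_F R ms i0 + t * \sum_(k < sumn ms) 'D_1 (fun y => uu y t) x ord0 k *
                           pd (Defs.comp X i0) k (uu x t).
  move=> i0.
  rewrite -(chain i0 gx dYv) -(chain i0 gx dXv).
  rewrite -(deriv_x (f := fun y => X (uu y t) ord0 i0)).
    apply: near_eq_derive.
    by apply: filterS (near_x oD Dxt) => y Dy /=; rewrite Hsol.
  exact: (comp_derivable (i:=i0) gx dXv).
have Et : forall i0 : 'I_(sumn ms),
  \sum_(k < sumn ms) 'D_1 (fun s => uu x s) t ord0 k * pd (Defs.comp Y i0) k (uu x t) =
  X (uu x t) ord0 i0 + t * \sum_(k < sumn ms) 'D_1 (fun s => uu x s) t ord0 k *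
                           pd (Defs.comp X i0) k (uu x t).
  move=> i0.
  rewrite -(chain i0 ht dYv) -(chain i0 ht dXv).
  rewrite -(deriv_t (unit_F R ms i0) x (f := fun s => X (uu x s) ord0 i0)); last first.
    exact: (comp_derivable (i:=i0) ht dXv).
  apply: near_eq_derive.
  by apply: filterS (near_t oD Dxt) => s Ds /=; rewrite Hsol.
pose v := uu x t.
pose ux := fun k : 'I_(sumn ms) => 'D_1 (fun y => uu y t) x ord0 k.
pose ut := fun k : 'I_(sumn ms) => 'D_1 (fun s => uu x s) t ord0 k.
pose pdX := fun i0 k : 'I_(sumn ms) => pd (Defs.comp X i0) k v.
pose pdY := fun i0 k : 'I_(sumn ms) => pd (Defs.comp Y i0) k v.
pose WY := fun s : 'I_(sumn ms) =>
  \sum_(j < sumn ms) unit_F R ms j * cov Gamma Y j s v.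
pose WX := fun s : 'I_(sumn ms) =>
  \sum_(j < sumn ms) unit_F R ms j * cov Gamma X j s v.
have CY : forall k i0 : 'I_(sumn ms),
    cov Gamma Y k i0 v = \sum_(s < sumn ms) cst_F R ms i0 k s * WY s.
  apply: (covW (cv := fun k s => cov Gamma Y k s v)) => i0 j k.
  exact: (HY i0 j k _ Uv).
have CX : forall k i0 : 'I_(sumn ms),
    cov Gamma X k i0 v = \sum_(s < sumn ms) cst_F R ms i0 k s * WX s.
  apply: (covW (cv := fun k s => cov Gamma X k s v)) => i0 j k.
  exact: (HX i0 j k _ Uv).
pose W := fun s => WY s - t * WX s.
have A : forall i0 k : 'I_(sumn ms),
    pdY i0 k - t * pdX i0 k = \sum_(s < sumn ms) cst_F R ms i0 k s * W s.
  move=> i0 k.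
  have h1 := CY k i0; have h2 := CX k i0.
  rewrite /cov in h1 h2.
  have hG : \sum_(l < sumn ms) Gamma i0 k l v * Y v ord0 l =
            t * \sum_(l < sumn ms) Gamma i0 k l v * X v ord0 l.
    rewrite mulr_sumr.
    transitivity (\sum_(l < sumn ms) (x * (Gamma i0 k l v * unit_F R ms l) +
                                      t * (Gamma i0 k l v * X v ord0 l))).
      by apply: eq_bigr => l _; rewrite /v -(Hsol _ _ Dxt l); ring.
    by rewrite big_split /= -mulr_sumr (Ge i0 k _ Uv) mulr0 add0r.
  rewrite (eq_bigr (fun s : 'I_(sumn ms) => cst_F R ms i0 k s * WY s - t * (cst_F R ms i0 k s * WX s)));
    last by move=> s _; rewrite /W; ring.
  rewrite sumrB -mulr_sumr -h1 -h2 hG /pdY /pdX.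
  ring.
have MW1 : forall i0, mulF W ux i0 = unit_F R ms i0.
  move=> i0; rewrite -sumM_mulF.
  under eq_bigr => k _ do rewrite -A.
  rewrite (eq_bigr (fun k : 'I_(sumn ms) => ux k * pdY i0 k - t * (ux k * pdX i0 k)));
    last by move=> k _; ring.
  rewrite sumrB -mulr_sumr /ux /pdY /pdX /v Ex; ring.
have MW2 : forall i0, mulF W ut i0 = X v ord0 i0.
  move=> i0; rewrite -sumM_mulF.
  under eq_bigr => k _ do rewrite -A.
  rewrite (eq_bigr (fun k : 'I_(sumn ms) => ut k * pdY i0 k - t * (ut k * pdX i0 k)));
    last by move=> k _; ring.
  rewrite sumrB -mulr_sumr /ut /pdY /pdX /v Et; ring.
change (ut i = mulF (fun j => X v ord0 j) ux i).
have e1 : mulF (fun j => X v ord0 j) ux i = mulF (fun p => mulF ut W p) ux i.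
  by apply: eq_mulF => // p; rewrite mulFC MW2.
rewrite e1 mulFA.
have e2 : mulF ut (fun p => mulF W ux p) i = mulF ut (fun p => unit_F R ms p) i.
  by apply: eq_mulF => // p; rewrite MW1.
by rewrite e2 mulFC mulF1.
Qed.
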